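(* Let $p,q$ be positive integers with $p+q$ odd. For every $n\ge1$, the map $\Delta_n:\mathcal{J}^{p,q}_n\to D_{2^{\lfloor n/2\rfloor+1}}$ is surjective.
   Context: Let $p,q$ be positive integers with $p+q$ odd. $\mathbb{Z}_{2^k}$ denotes the integers modulo $2^k$ ($\mathbb{Z}_1$ trivial); as $p+q$ is odd, division by $p+q$ and $(p+q)^2$ is well defined in $\mathbb{Z}_{2^k}$. For $m\ge1$, $D_{2m}$ is the dihedral group of order $2m$, realized as pairs $(f,x)$, $f\in\mathbb{Z}_2$, $x\in\mathbb{Z}_m$, with product $(f_1,x_1)(f_2,x_2)=(f_1+f_2,x_1+(-1)^{f_1}x_2)$. Define $\Phi:D_{2m}\to D_{2m}$, $\Phi((f,x))=(f,\delta(f=1)(p+q)(p-q)-x)$, where $\delta(f=1)$ is $1$ if $f=1$ and $0$ otherwise. $\mathrm{Aut}(T_1)$ is trivial; for $k\ge1$, $\mathrm{Aut}(T_{k+1})$ is the set of triples $g=(g_f,g_L,g_R)$, $g_f\in\mathbb{Z}_2$, $g_L,g_R\in\mathrm{Aut}(T_k)$, with product $(f,A,B)(g,C,D)=(f+g,AC,BD)$ if $f=0$ and $(f+g,AD,BC)$ if $f=1$; subscripts chain ($g_{LR}=(g_L)_R$, $g_{Lf}=(g_L)_f$). Recursively: $\mathcal{J}_1=\mathrm{Aut}(T_2)$, $\psi_1=0$, $\Delta_1(g)=(g_f,0)$; $\mathcal{J}_2=\{g\in\mathrm{Aut}(T_3):g_L=g_R\}$, $\psi_2(g)=\delta(g_{Lf}=1)\in\mathbb{Z}_2$,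 $\Delta_2(g)=(g_f,\psi_2(g))$; for $n\ge3$, $\mathcal{J}_n=\{g\in\mathrm{Aut}(T_{n+1}):g_L,g_R\in\mathcal{J}_{n-1},\ \Delta_{n-1}(g_L)=\Phi(\Delta_{n-1}(g_R))\}$, with $\psi_n:\mathcal{J}_n\to\mathbb{Z}_{2^{\lfloor n/2\rfloor}}$ given by $\psi_n(g)=(\psi_{n-1}(g_L)+\psi_{n-1}(g_R))/(p+q)$ for odd $n$ and $\psi_n(g)=\big(2(\psi_{n-2}(g_{LL})+\psi_{n-2}(g_{RL}))-\delta(g_{Lf}=1)(p+q)(p-q)\big)/(p+q)^2$ for even $n$ (with $2\psi_{n-2}(\cdot)$ read in $\mathbb{Z}_{2^{n/2}}$), and $\Delta_n:\mathcal{J}_n\to D_{2^{\lfloor n/2\rfloor+1}}$ given by $\Delta_n(g)=(g_f,\psi_{n-1}(g_L)-\psi_{n-1}(g_R))$ for odd $n$ and $\Delta_n(g)=(g_f,(p+q)\psi_n(g)-2\psi_{n-1}(g_R))$ for even $n$. *)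

(* Defs.v *)
From mathcomp Require Import all_boot all_algebra.
Import GRing.Theory Num.Theory.
Unset Printing Implicit Defensive.
Local Open Scope ring_scope.

(* autT k = Aut(T_{k+1}):  Aut(T_1) = unit,
   Aut(T_{k+2}) = triples (g_f, g_L, g_R) encoded as ((g_f, g_L), g_R). *)
Fixpoint autT (k : nat) : Type :=
  if k is k'.+1 then (bool * autT k' * autT k')%type else unit.

Definition gF {k : nat} (g : autT k.+1) : bool := g.1.1.
Definition gL {k : nat} (g : autT k.+1) : autT k := g.1.2.
Definition gR {k : nat} (g : autT k.+1) : autT k := g.2.

(* Z_{2^k} is represented by canonical integer representatives in [0, 2^k). *)
Definition modulus (k : nat) : int := (2 ^ k)%N%:Z.
Definition red (k : nat) (a : int) : int := modz a (modulus k).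

(* a / u in Z_{2^k}: the element x of Z_{2^k} with u * x = a (mod 2^k);
   unique when u is odd. *)
Definition zdiv (k : nat) (a u : int) : int :=
  match [pick x : 'I_(2 ^ k) | modz (u * (x : nat)%:Z - a) (modulus k) == 0] with
  | Some x => (x : nat)%:Z
  | None => 0
  end.

Definition corr (p q : nat) (f : bool) : int :=
  if f then (p + q)%N%:Z * (p%:Z - q%:Z) else 0.

(* D_{2^{k+1}} : pairs (f, x), f in Z_2 (bool), x in Z_{2^k} (canonical rep).
   Phi_k : D_{2^{k+1}} -> D_{2^{k+1}}. *)
Definition Phi (p q : nat) (k : nat) (a : bool * int) : bool * int :=
  (a.1, red k (corr p q a.1 - a.2)).

(* psiP n = (psi_n, psi_{n+1}), psi_n : J_n -> Z_{2^{floor(n/2)}}, defined on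
   all of Aut(T_{n+1}).  psi_0 is an unused dummy, psi_1 = 0, psi_2 as given. *)
Fixpoint psiP (p q : nat) (n : nat) : (autT n -> int) * (autT n.+1 -> int) :=
  match n return (autT n -> int) * (autT n.+1 -> int) with
  | 0 => (fun _ => 0, fun _ => 0)
  | S m =>
      let pr := psiP p q m in
      (pr.2,
       match m return (autT m -> int) -> (autT m.+1 -> int) -> autT m.+2 -> int with
       | 0 => fun _ _ g => (gF (gL g) : nat)%:Z
       | S m' => fun f0 f1 g =>
           if odd m then
             zdiv m'.+3./2 (f1 (gL g) + f1 (gR g)) (p + q)%N%:Z
           else
             zdiv m'.+3./2
               (2 * (f0 (gL (gL g)) + f0 (gL (gR g))) - corr p q (gF (gL g)))
               ((p + q)%N%:Z ^+ 2)
       end pr.1 pr.2)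
  end.

Definition psi (p q : nat) (n : nat) : autT n -> int := (psiP p q n).1.

Definition Delta (p q : nat) (n : nat) : autT n -> bool * int :=
  match n return autT n -> bool * int with
  | 0 => fun _ => (false, 0)
  | 1 => fun g => (gF g, 0)
  | 2 => fun g => (gF g, psi p q 2 g)
  | S (S (S k)) => fun g =>
      if odd k.+3 then
        (gF g, red k.+3./2 (psi p q k.+2 (gL g) - psi p q k.+2 (gR g)))
      else
        (gF g, red k.+3./2 ((p + q)%N%:Z * psi p q k.+3 g - 2 * psi p q k.+2 (gR g)))
  end.

Fixpoint J (p q : nat) (n : nat) : autT n -> Prop :=
  match n return autT n -> Prop with
  | 0 => fun _ => True
  | S m =>
      match m return (autT m -> Prop) -> autT m.+1 -> Prop with
      | 0 => fun _ _ => True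
      | 1 => fun _ g => gL g = gR g
      | S (S k) => fun Jm g =>
          Jm (gL g) /\ Jm (gR g) /\
          Delta p q k.+2 (gL g) = Phi p q k.+2./2 (Delta p q k.+2 (gR g))
      end (J p q m)
  end.

(* Main.v *)
Require Import Defs.
From mathcomp Require Import all_boot all_algebra.
From mathcomp Require Import all_order ring lra zify.
Import Order.TTheory GRing.Theory Num.Theory.
Local Open Scope ring_scope.

Lemma modulus_gt0 k : 0 < modulus k.
Proof. by rewrite /modulus ltz_nat expn_gt0. Qed.

Lemma modulusS k : modulus k.+1 = 2 * modulus k.
Proof. by rewrite /modulus expnS PoszM. Qed.

Lemma red_def k x : exists c, x = red k x + c * modulus k.
Proof. exists (x %/ modulus k)%Z; rewrite /red addrC; exact: divz_eq. Qed.

Lemma red_eq k x y c : x = y + c * modulus k -> red k x = red k y.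
Proof. by move=> ->; rewrite /red addrC modzMDl. Qed.

Lemma red_small k x : 0 <= x < modulus k -> red k x = x.
Proof. exact: modz_small. Qed.

Lemma red_range k x : 0 <= red k x < modulus k.
Proof.
have h := modulus_gt0 k.
by rewrite /red modz_ge0 ?ltz_pmod // lt0r_neq0.
Qed.

Lemma zdiv_eq k X u a : coprimez (modulus k) u -> 0 <= a < modulus k ->
  (exists c, u * a = X + c * modulus k) -> zdiv k X u = a.
Proof.
move=> cop /andP[a0 aM] [c Hc]; rewrite /zdiv.
case: pickP => [x /eqP Hx | H].
  have hd : (modulus k %| u * ((x : nat)%:Z - a))%Z.
    have -> : u * ((x : nat)%:Z - a) = (u * (x : nat)%:Z - X) - c * modulus k.
      by rewrite mulrBr Hc; ring.
    by rewrite rpredB ?dvdz_mull //; apply/dvdz_mod0P.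
  move: hd; rewrite Gauss_dvdzr // -eqz_mod_dvd => /eqP.
  rewrite !modz_small //; first by apply/andP; split.
  by apply/andP; split => //; rewrite /modulus ltz_nat ltn_ord.
have aE : a = `|a|%N%:Z by rewrite gez0_abs.
have alt : (`|a| < 2 ^ k)%N by rewrite -ltz_nat -aE.
move: (H (Ordinal alt)) => /=; rewrite -aE Hc.
by rewrite addrC addKr modzMl eqxx.
Qed.

Section S2.
Variables p q : nat.
Hypothesis hpq : odd (p + q).

Lemma cop k : coprimez (modulus k) (p + q)%N%:Z.
Proof.
rewrite coprimezE /modulus !absz_nat; apply: coprimeXl; by rewrite coprime2n.
Qed.

Lemma cop2 k : coprimez (modulus k) ((p + q)%N%:Z ^+ 2).
Proof. exact/coprimezXr/cop. Qed.

Lemma psiS m (g : autT m.+3) : psi p q m.+3 g =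
  if odd m.+1 then zdiv m.+3./2 (psi p q m.+2 (gL g) + psi p q m.+2 (gR g)) (p + q)%N%:Z
  else zdiv m.+3./2 (2 * (psi p q m.+1 (gL (gL g)) + psi p q m.+1 (gL (gR g))) - corr p q (gF (gL g)))
       ((p + q)%N%:Z ^+ 2).
Proof. by []. Qed.

Lemma DeltaS m (g : autT m.+3) : Delta p q m.+3 g =
  if odd m.+3 then (gF g, red m.+3./2 (psi p q m.+2 (gL g) - psi p q m.+2 (gR g)))
  else (gF g, red m.+3./2 ((p + q)%N%:Z * psi p q m.+3 g - 2 * psi p q m.+2 (gR g))).
Proof. by []. Qed.

Lemma JS m (g : autT m.+3) : J p q m.+3 g <->
  [/\ J p q m.+2 (gL g), J p q m.+2 (gR g) &
      Delta p q m.+2 (gL g) = Phi p q m.+2./2 (Delta p q m.+2 (gR g))].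
Proof. by split => [[? [? ?]]|[? ? ?]]. Qed.
End S2.

Section S3.
Variables p q : nat.
Hypothesis hpq : odd (p + q).

Lemma sE : (p + q)%N%:Z = 2 * ((p + q)./2)%:Z + 1.
Proof.
have := odd_double_half (p + q); rewrite hpq; lia.
Qed.

Lemma main k : forall (f : bool) (a b : int),
  0 <= a < modulus k.+1./2 -> 0 <= b < modulus k./2 ->
  exists g : autT k.+1, [/\ J p q k.+1 g, gF g = f, psi p q k.+1 g = a,
     psi p q k (gL g) = b &
     Delta p q k.+1 g = (f, red k.+1./2 (2 * b - (p + q)%N%:Z * a))].
Proof.
elim: k => [|[|m] IH] f a b Ha Hb.
- rewrite /modulus /= in Ha Hb.
  have a0 : a = 0 by lia.
  have b0 : b = 0 by lia.
  exists ((f, tt), tt); split => //.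
  by rewrite /red /modulus expn0 modz1.
- rewrite /modulus /= in Ha Hb.
  have b0 : b = 0 by lia.
  have hv : psi p q 2 ((f, (a != 0, tt, tt)), (a != 0, tt, tt)) = a.
    by rewrite /psi /= /gF /gL /=; have [->|->] : a = 0 \/ a = 1 by lia.
  exists ((f, (a != 0, tt, tt)), (a != 0, tt, tt)); split => //.
  rewrite /= hv b0; congr pair.
  rewrite -{1}(red_small 1 a); last by rewrite /modulus /=; lia.
  apply: (red_eq _ _ _ ((((p + q)./2)%:Z + 1) * a)).
  rewrite sE /modulus expn1; ring.
- set s := (p + q)%N%:Z.
  set L := m.+1./2.
  set K := m.+2./2.
  have NL : m.+3./2 = L.+1 by [].
  pose ar := (a %% 2)%Z; pose ah := (a %/ 2)%Z.
  pose e := ar != 0.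
  pose w := s ^+ 2 * ah + (if e then s * p%:Z else 0).
  have Hw : 2 * w = corr p q e + s ^+ 2 * a.
    have aE := divz_eq a 2.
    have ar0 : 0 <= ar by rewrite /ar modz_ge0.
    have ar2 : ar < 2 by rewrite /ar ltz_pmod.
    rewrite /w /corr /e; case: eqP => [h0|h1].
      by rewrite /= aE -/ar -/ah h0; ring.
    have h1' : ar = 1 by lia.
    rewrite /= aE -/ar -/ah h1' /s PoszD; ring.
  pose u := red L w.
  have [c1 Hc1] := red_def K (s * a - b).
  have [d Hd] := red_def L w.
  have [A [JA FA PA PLA DA]] := IH e b u Hb (red_range L w).
  have [B [JB FB PB PLB DB]] := IH e (red K (s * a - b)) 0 (red_range _ _)
    ltac:(by rewrite lexx modulus_gt0).
  exists ((f, A), B).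
  have KL : K = if odd m then L else L.+1.
    have h1 : L = (odd m + m./2)%N := uphalf_half m.
    have h2 : K = (m./2).+1 by [].
    by case: (odd m) h1 => /= ->; rewrite h2 // add1n.
  rewrite -/K in DA DB.
  set r := red K (s * a - b) in Hc1 PB DB *.
  rewrite -/u in Hd.
  set M := modulus L in Hd.
  have MN : modulus m.+3./2 = 2 * M by rewrite NL modulusS.
  have Pg : psi p q m.+3 (f, A, B) = a.
    rewrite psiS /gL /gR /gF /=.
    case: (boolP (odd m)) => om /=.
      rewrite -/(gL A) -/(gL B) -/(gF A) PLA PLB FA.
      apply: zdiv_eq; [exact: cop2 | exact: Ha| exists d].
      rewrite MN; lra.
    rewrite PA PB; apply: zdiv_eq; [exact: cop | exact: Ha| exists c1].
    move: Hc1; rewrite KL (negbTE om) MN /=; lra.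
  have hr : r = s * a - b - c1 * modulus K by lra.
  have hu : u = w - d * M by lra.
  split => //.
  - apply/JS; split => //.
    change (Delta p q m.+2 A = Phi p q m.+2./2 (Delta p q m.+2 B)).
    rewrite DA DB /Phi /=; congr pair.
    have [c2 Hc2] := red_def K (2 * 0 - s * r).
    set r2 := red K (2 * 0 - s * r) in Hc2 *.
    have hr2 : r2 = - s * r - c2 * modulus K by lra.
    rewrite hr2 hr hu.
    case: (boolP (odd m)) => om.
      apply: (red_eq _ _ _ (- 2 * d - c2 + s * c1)).
      rewrite KL om; lra.
    apply: (red_eq _ _ _ (- d - c2 + s * c1)).
    rewrite KL (negbTE om) modulusS; lra.
  - rewrite DeltaS /gL /gR /gF /=.
    case: (boolP (odd m)) => om /=.
      rewrite Pg PB; congr pair.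
      apply: (red_eq _ _ _ c1); rewrite hr MN KL om; lra.
    rewrite PA PB; congr pair.
    apply: (red_eq _ _ _ c1); rewrite hr MN KL (negbTE om) modulusS; lra.
Qed.
End S3.

Theorem lemma3 (p q : nat) (hp : (0 < p)%N) (hq : (0 < q)%N) (hpq : odd (p + q))
  (n : nat) (hn : (1 <= n)%N) :
  forall (f : bool) (x : int), 0 <= x < modulus n./2 ->
  exists g : autT n, J p q n g /\ Delta p q n g = (f, x).
Proof.
move=> f x Hx; case: n hn Hx => [//|k] _ Hx.
set N := k.+1./2 in Hx *.
have [[u0 v0] /= Huv] := coprimezP _ _ (cop p q hpq N).
have [g [Jg _ _ _ Dg]] := main p q hpq k f (red N (- (x * v0))) 0 (red_range _ _)
  ltac:(by rewrite lexx modulus_gt0).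
exists g; split; first exact: Jg.
apply: (eq_trans Dg); congr pair.
have [c Hc] := red_def N (- (x * v0)).
set r := red N (- (x * v0)) in Hc *.
set M := modulus N in Hc Huv *.
have h : x * v0 * (p + q)%N%:Z = x - x * u0 * M.
  have := congr1 (fun t => x * t) Huv; rewrite /= mulr1 => {2}<-; ring.
rewrite -{1}(red_small N x Hx).
apply: (red_eq _ _ _ (- x * u0 + (p + q)%N%:Z * c)).
have hr : r = - (x * v0) - c * M by lra.
rewrite hr -/M -/N; lra.
Qed.
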